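(* Let $(X,\mathcal{E})$ be an unbounded discrete ballean. The following conditions are equivalent: (1) $(X,\mathcal{E})$ is ultradiscrete; (2) $(X,\mathcal{E})$ is extremely normal; (3) $(X,\mathcal{E})$ is ultranormal; (4) $(X,\mathcal{E})$ is maximal and irresolvable.
   Context: A ballean $(X,\mathcal{E})$ is a set with a coarse structure (a family of subsets of $X\times X$ each containing the diagonal, closed under composition, inverses, and taking subsets containing the diagonal, and covering every pair of points). $E[x]=\{y:(x,y)\in E\}$, $E[A]=\bigcup_{a\in A}E[a]$. $Y$ is bounded if $Y\subseteq E[x]$ for some $x$ and $E\in\mathcal{E}$; $\mathcal{B}_X$ denotes the family of bounded sets. $A$ is large if $X=E[A]$ for some $E\in\mathcal{E}$. Subsets $Y,Z$ are asymptotically disjoint if $E[Y]\cap E[Z]$ is bounded for every $E\in\mathcal{E}$. An unbounded ballean is ultranormal if no two unbounded subsets are asymptotically disjoint; extremely normal if every unbounded subset is large; maximal if $X$ is bounded with respect to every coarse structure strictly containing $\mathcal{E}$; irresolvable if $X$ cannot be partitioned into two large subsets. The ballean is discrete if for every $E\in\mathcal{E}$ there is a bounded $B$ with $E[x]=\{x\}$ for all $x\in X\setminus B$. An unbounded discrete ballean is ultradiscrete if $\{X\setminus B: B\in\mathcal{B}_X\}$ is an ultrafilter on $X$. *)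

(* Defs.v *)
Set Implicit Arguments.

Section Ballean.
Variable X : Type.

Definition rel := X -> X -> Prop.
Definition coarse_family := rel -> Prop.

(* E[x] = {y : (x,y) in E};  E[A] = union of E[a], a in A *)
Definition ball (E : rel) (x : X) : X -> Prop := fun y => E x y.
Definition ballA (E : rel) (A : X -> Prop) : X -> Prop :=
  fun y => exists a, A a /\ E a y.

Definition contains_diag (E : rel) : Prop := forall x, E x x.
Definition comp (E F : rel) : rel := fun x z => exists y, E x y /\ F y z.
Definition inv (E : rel) : rel := fun x y => E y x.

Definition coarse_structure (EE : coarse_family) : Prop :=
  (forall E, EE E -> contains_diag E) /\
  (forall E F, EE E -> EE F -> EE (comp E F)) /\
  (forall E, EE E -> EE (inv E)) /\
  (forall E E', EE E -> contains_diag E' -> (forall x y, E' x y -> E x y) -> EE E') /\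
  (forall x y, exists E, EE E /\ E x y).

Definition bounded (EE : coarse_family) (Y : X -> Prop) : Prop :=
  exists x E, EE E /\ forall y, Y y -> ball E x y.

Definition unbounded_ballean (EE : coarse_family) : Prop :=
  ~ bounded EE (fun _ => True).

Definition large (EE : coarse_family) (A : X -> Prop) : Prop :=
  exists E, EE E /\ forall y, ballA E A y.

Definition asymptotically_disjoint (EE : coarse_family) (Y Z : X -> Prop) : Prop :=
  forall E, EE E -> bounded EE (fun x => ballA E Y x /\ ballA E Z x).

Definition ultranormal (EE : coarse_family) : Prop :=
  unbounded_ballean EE /\
  ~ exists Y Z, ~ bounded EE Y /\ ~ bounded EE Z /\ asymptotically_disjoint EE Y Z.

Definition extremely_normal (EE : coarse_family) : Prop :=
  unbounded_ballean EE /\ forall Y, ~ bounded EE Y -> large EE Y.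

Definition strictly_contains (EE' EE : coarse_family) : Prop :=
  (forall E, EE E -> EE' E) /\ exists E, EE' E /\ ~ EE E.

Definition maximal (EE : coarse_family) : Prop :=
  unbounded_ballean EE /\
  forall EE', coarse_structure EE' -> strictly_contains EE' EE ->
    bounded EE' (fun _ => True).

Definition irresolvable (EE : coarse_family) : Prop :=
  unbounded_ballean EE /\
  ~ exists A : X -> Prop, large EE A /\ large EE (fun x => ~ A x).

Definition discrete (EE : coarse_family) : Prop :=
  forall E, EE E -> exists B, bounded EE B /\
    forall x, ~ B x -> forall y, (E x y <-> y = x).

Definition is_ultrafilter (F : (X -> Prop) -> Prop) : Prop :=
  F (fun _ => True) /\
  ~ F (fun _ => False) /\
  (forall A B, F A -> (forall x, A x -> B x) -> F B) /\
  (forall A B, F A -> F B -> F (fun x => A x /\ B x)) /\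
  (forall A, F A \/ F (fun x => ~ A x)).

Definition cobounded_family (EE : coarse_family) : (X -> Prop) -> Prop :=
  fun A => exists B, bounded EE B /\ forall x, A x <-> ~ B x.

Definition ultradiscrete (EE : coarse_family) : Prop :=
  unbounded_ballean EE /\ discrete EE /\ is_ultrafilter (cobounded_family EE).

End Ballean.

(* Main.v *)
Require Import Defs.
From Stdlib Require Import Classical.
From mathcomp Require classical_sets.

Lemma coloring (X : Type) (R : X -> X -> Prop) : (forall x y, R x y -> R y x) ->
  exists A : X -> Prop, forall x, (exists y, y <> x /\ R x y) ->
    (A x -> exists y, R x y /\ ~ A y) /\ (~ A x -> exists y, R x y /\ A y).
Proof.
intros Rsym.
set (P := fun Z : X * bool -> Prop =>
  (forall x, ~ (Z (x, true) /\ Z (x, false))) /\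
  (forall x b, Z (x, b) -> exists y, R x y /\ Z (y, negb b))).
destruct (@classical_sets.Zorn_bigcup (X * bool)%type P) as [Z [[Zd Zn] Zmax]].
- intros F FP Ftot. split.
  + intros x [[Z1 F1 H1] [Z2 F2 H2]].
    destruct (Ftot Z1 Z2 F1 F2) as [S|S].
    * destruct (FP Z2 F2) as [D _]. apply (D x). split; [apply S; exact H1|exact H2].
    * destruct (FP Z1 F1) as [D _]. apply (D x). split; [exact H1|apply S; exact H2].
  + intros x b [Z1 F1 H1]. destruct (FP Z1 F1) as [_ N].
    destruct (N x b H1) as [y [Ry Zy]]. exists y. split; auto. exists Z1; auto.
- exists (fun x => Z (x, true)). intros x [y [yx Rxy]].
  assert (col : Z (x, true) \/ Z (x, false)).
  { apply NNPP. intros Hn.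
    assert (Hx1 : ~ Z (x, true)) by tauto.
    assert (Hx2 : ~ Z (x, false)) by tauto.
    destruct (classic (Z (y, true) \/ Z (y, false))) as [Hy | Hy].
    - (* add x with opposite color of y *)
      destruct Hy as [Hy|Hy].
      + apply (Zmax (fun p => Z p \/ p = (x, false))).
        * unfold classical_sets.proper; split. { intros p Hp; left; exact Hp. }
          intros Hs. apply Hx2, (Hs (x, false)); right; reflexivity.
        * red; split.
          { intros z [h1 h2]; repeat match goal with H : _ \/ _ |- _ => destruct H end;
            repeat match goal with H : (_,_) = (_,_) |- _ => injection H; clear H; intros; subst end;
            first [exact (Zd _ (conj ltac:(assumption) ltac:(assumption))) | congruence | tauto | (exfalso; eapply Zd; split; eassumption)]. }
          { intros z b [h|h].
            - destruct (Zn z b h) as [w [Rw Zw]]. exists w. split; auto.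
            - injection h as -> ->. exists y. split; auto. }
      + apply (Zmax (fun p => Z p \/ p = (x, true))).
        * unfold classical_sets.proper; split. { intros p Hp; left; exact Hp. }
          intros Hs. apply Hx1, (Hs (x, true)); right; reflexivity.
        * red; split.
          { intros z [h1 h2]; repeat match goal with H : _ \/ _ |- _ => destruct H end;
            repeat match goal with H : (_,_) = (_,_) |- _ => injection H; clear H; intros; subst end;
            first [exact (Zd _ (conj ltac:(assumption) ltac:(assumption))) | congruence | tauto | (exfalso; eapply Zd; split; eassumption)]. }
          { intros z b [h|h].
            - destruct (Zn z b h) as [w [Rw Zw]]. exists w. split; auto.
            - injection h as -> ->. exists y. split; auto. }
    - assert (Hy1 : ~ Z (y, true)) by tauto.
      assert (Hy2 : ~ Z (y, false)) by tauto.
      apply (Zmax (fun p => Z p \/ p = (x, true) \/ p = (y, false))).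
      * unfold classical_sets.proper; split. { intros p Hp; left; exact Hp. }
        intros Hs. apply Hx1, (Hs (x, true)); right; left; reflexivity.
      * red; split.
        { intros z [h1 h2]; repeat match goal with H : _ \/ _ |- _ => destruct H end;
            repeat match goal with H : (_,_) = (_,_) |- _ => injection H; clear H; intros; subst end;
            first [congruence | tauto | (exfalso; eapply Zd; split; eassumption)]. }
        { intros z b [h|[h|h]].
          - destruct (Zn z b h) as [w [Rw Zw]]. exists w. split; auto.
          - injection h as -> ->. exists y. split; auto.
          - injection h as -> ->. exists x. split; auto. }
  }
  split.
  + intros Hx. destruct (Zn x true Hx) as [w [Rw Zw]]. exists w. split; auto.
    intros Hw. exact (Zd w (conj Hw Zw)).
  + intros Hx. destruct col as [c|c]; [contradiction|].
    destruct (Zn x false c) as [w [Rw Zw]]. exists w. split; auto.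
Qed.


Section L.
Context {X : Type} {EE : (X -> X -> Prop) -> Prop} (cs : coarse_structure EE).

Lemma diagE {E} x : EE E -> E x x.
Proof using cs. destruct cs as [D _]. intro h; exact (D E h x). Qed.

Lemma compE {E F} : EE E -> EE F -> EE (comp E F).
Proof using cs. destruct cs as [_ [C _]]. auto. Qed.

Lemma invE {E} : EE E -> EE (inv E).
Proof using cs. destruct cs as [_ [_ [I _]]]. auto. Qed.

Lemma subE E E' : EE E -> (forall x, E' x x) -> (forall x y, E' x y -> E x y) -> EE E'.
Proof using cs. destruct cs as [_ [_ [_ [S _]]]]. intros; eapply S; eauto. Qed.

Lemma covE x y : exists E, EE E /\ E x y.
Proof using cs. destruct cs as [_ [_ [_ [_ C]]]]. auto. Qed.

Lemma bsub {Y Z} : bounded EE Y -> (forall x, Z x -> Y x) -> bounded EE Z.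
Proof using cs. intros [x [E [HE HY]]] HZ. exists x, E. split; auto. Qed.

Lemma bunion {Y Z} : bounded EE Y -> bounded EE Z -> bounded EE (fun x => Y x \/ Z x).
Proof using cs.
intros [x0 [E [HE HY]]] [z0 [F [HF HZ]]].
destruct (covE x0 z0) as [H [HH Hxz]].
exists x0, (comp E (comp H F)). split.
- apply compE; auto. apply compE; auto.
- intros y [hy|hy].
  + exists y. split. apply HY; auto. apply diagE. apply compE; auto.
  + exists x0. split. apply diagE; auto. exists z0. split; auto. apply HZ; auto.
Qed.

Lemma bball {B E} : bounded EE B -> EE E -> bounded EE (ballA E B).
Proof using cs.
intros [x0 [F [HF HB]]] HE. exists x0, (comp F E). split. apply compE; auto.
intros y [b [Bb Eb]]. exists b. split; auto. apply HB; auto.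
Qed.

Lemma bsingle x : bounded EE (fun y => y = x).
Proof using cs. destruct (covE x x) as [E [HE _]]. exists x, E. split; auto.
intros y ->. apply diagE; auto. Qed.

Lemma unb_X_sub {Y} : unbounded_ballean EE -> bounded EE (fun x => ~ Y x) -> ~ bounded EE Y.
Proof using cs.
intros ub hc hY. apply ub. eapply bsub. apply (bunion hY hc). intros x _. apply classic.
Qed.

Lemma bnd_large {A} : unbounded_ballean EE -> bounded EE (fun x => ~ A x) -> large EE A.
Proof using cs.
intros ub [x0 [F [HF HA]]].
destruct (classic (exists a, A a)) as [[a Aa]|na].
- destruct (covE a x0) as [H [HH Hax]].
  exists (comp H F). split. apply compE; auto.
  intros y. destruct (classic (A y)) as [Ay|nAy].
  + exists y. split; auto. apply diagE. apply compE; auto.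
  + exists a. split; auto. exists x0. split; auto. apply HA; auto.
- exfalso. apply ub. exists x0, F. split; auto. intros y _. apply HA.
  intro Ay. apply na. eauto.
Qed.

End L.
Section D.
Context {X : Type} {EE : (X -> X -> Prop) -> Prop} (cs : coarse_structure EE) (dis : discrete EE).

Lemma large_bnd {A} : large EE A -> bounded EE (fun x => ~ A x).
Proof using cs dis.
intros [E [HE HA]]. destruct (dis _ HE) as [B [HB HBd]].
eapply (bsub cs). apply (bball cs HB HE).
intros y nAy. destruct (HA y) as [a [Aa Eay]].
destruct (classic (B a)) as [Ba|nBa].
- exists a; auto.
- exfalso. apply (proj1 (HBd a nBa y)) in Eay. subst. auto.
Qed.

Lemma asd_core Y Z E : EE E -> exists B, bounded EE B /\
  forall x, ballA E Y x -> ballA E Z x -> (Y x /\ Z x) \/ ballA E B x.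
Proof using cs dis.
intros HE. destruct (dis _ HE) as [B [HB HBd]]. exists B. split; auto.
intros x [y [Yy Eyx]] [z [Zz Ezx]].
destruct (classic (B y)) as [By|nBy]. right; exists y; auto.
destruct (classic (B z)) as [Bz|nBz]. right; exists z; auto.
apply (proj1 (HBd y nBy x)) in Eyx. apply (proj1 (HBd z nBz x)) in Ezx. subst.
left; auto.
Qed.

Lemma asd_empty Y Z : (forall x, Y x -> Z x -> False) -> asymptotically_disjoint EE Y Z.
Proof using cs dis.
intros hd E HE. destruct (asd_core Y Z _ HE) as [B [HB Hc]].
eapply (bsub cs). apply (bball cs HB HE). intros x [h1 h2].
destruct (Hc x h1 h2) as [[a b]|h]; auto. exfalso; eauto.
Qed.

Lemma asd_bnd Y Z : bounded EE (fun x => Y x /\ Z x) -> asymptotically_disjoint EE Y Z.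
Proof using cs dis.
intros hb E HE. destruct (asd_core Y Z _ HE) as [B [HB Hc]].
eapply (bsub cs). apply (bunion cs hb (bball cs HB HE)). intros x [h1 h2]. auto.
Qed.

Lemma asd_inter {Y Z E} : EE E -> asymptotically_disjoint EE Y Z -> bounded EE (fun x => Y x /\ Z x).
Proof using cs dis.
intros HE had. eapply (bsub cs). apply (had E HE). intros x [h1 h2].
split; exists x; split; auto; apply (diagE cs); auto.
Qed.



Lemma liftb {EE' : (X -> X -> Prop) -> Prop} {B} :
  (forall E, EE E -> EE' E) -> bounded EE B -> bounded EE' B.
Proof. intros inc [x [E [HE H]]]. exists x, E. auto. Qed.

Lemma T_ud_en : ultradiscrete EE -> extremely_normal EE.
Proof using cs dis.
intros [ub [_ [_ [_ [_ [_ Hult]]]]]]. split; auto. intros Y nbY.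
apply (bnd_large cs); auto.
destruct (Hult Y) as [[B [HB HBi]]|[B [HB HBi]]].
- eapply (bsub cs HB). intros x nYx. apply NNPP. intro nB. apply nYx, HBi, nB.
- exfalso. apply nbY. eapply (bsub cs HB). intros x Yx. apply NNPP. intro nB.
  apply (proj2 (HBi x) nB Yx).
Qed.

Lemma T_en_ud : unbounded_ballean EE -> extremely_normal EE -> ultradiscrete EE.
Proof using cs dis.
intros ub [_ en]. split; auto. split; auto.
assert (x0 : exists x : X, True).
{ destruct (en (fun _ => True) ub) as [E [HE _]].
  destruct (dis _ HE) as [B [[x _] _]]. eauto. }
destruct x0 as [x0 _].
assert (be : bounded EE (fun _ => False)).
{ eapply (bsub cs (bsingle cs x0)). intros x f; destruct f. }
split; [|split; [|split; [|split]]].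
- exists (fun _ => False). split; auto. tauto.
- intros [B [HB Hi]]. apply ub. eapply (bsub cs HB). intros x _.
  apply NNPP. intro nB. apply (proj2 (Hi x) nB).
- intros A C [B [HB Hi]] AC. exists (fun x => ~ C x). split.
  + eapply (bsub cs HB). intros x nC. apply NNPP. intro nB. apply nC, AC, Hi, nB.
  + intro x; split; [tauto|intro h; apply NNPP; exact h].
- intros A C [B1 [HB1 Hi1]] [B2 [HB2 Hi2]]. exists (fun x => ~ (A x /\ C x)). split.
  + eapply (bsub cs (bunion cs HB1 HB2)). intros x h.
    destruct (classic (B1 x)); auto. destruct (classic (B2 x)); auto.
    exfalso. apply h. split; [apply Hi1|apply Hi2]; auto.
  + intro x; split; [tauto|intro h; apply NNPP; exact h].
- intros A. destruct (classic (bounded EE A)) as [bA|nbA].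
  + right. exists A. split; auto. tauto.
  + left. exists (fun x => ~ A x). split.
    * apply large_bnd. apply en; auto.
    * intro x; split; [tauto|intro h; apply NNPP; exact h].
Qed.

Lemma T_en_un : extremely_normal EE -> ultranormal EE.
Proof using cs dis.
intros [ub en]. split; auto. intros [Y [Z [nY [nZ had]]]].
destruct (en Y nY) as [E [HE _]].
pose proof (large_bnd (en Y nY)) as bnY.
pose proof (asd_inter HE had) as bYZ.
apply nZ. eapply (bsub cs (bunion cs bYZ bnY)). intros x Zx.
destruct (classic (Y x)); auto.
Qed.

Lemma T_un_en : ultranormal EE -> extremely_normal EE.
Proof using cs dis.
intros [ub un]. split; auto. intros Y nbY. apply (bnd_large cs); auto.
apply NNPP. intro nb. apply un. exists Y, (fun x => ~ Y x). split; auto. split; auto.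
apply asd_empty. auto.
Qed.

Lemma T_irr : unbounded_ballean EE -> irresolvable EE.
Proof using cs dis.
intros ub. split; auto. intros [A [lA lnA]].
pose proof (large_bnd lA) as h1. pose proof (large_bnd lnA) as h2.
apply ub. eapply (bsub cs (bunion cs h1 h2)). intros x _. simpl.
destruct (classic (A x)); auto.
Qed.

Lemma K_lemma {EE' : (X -> X -> Prop) -> Prop} (cs' : coarse_structure EE') T :
  extremely_normal EE -> (forall E, EE E -> EE' E) ->
  bounded EE' T -> ~ bounded EE T -> bounded EE' (fun _ => True).
Proof using cs dis.
intros [ub en] inc hT nT.
pose proof (liftb inc (large_bnd (en T nT))) as h.
eapply (bsub cs' (bunion cs' hT h)). intros x _. simpl. apply classic.
Qed.

Lemma T_un_max : ultranormal EE -> maximal EE.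
Proof using cs dis.
intros un. pose proof (T_un_en un) as en. destruct en as [ub en'].
split; auto. intros EE' cs' [inc [E' [HE' nE']]].
pose proof (fun T => K_lemma cs' T (conj ub en') inc) as K.
set (R := fun x y => E' x y \/ E' y x).
destruct (coloring _ R) as [A HA].
{ unfold R; intros; tauto. }
set (S := fun x => exists y, y <> x /\ R x y).
destruct (classic (bounded EE S)) as [bS|nS].
- set (M := fun x => S x \/ ballA E' S x).
  destruct (classic (bounded EE M)) as [bM|nM].
  + exfalso. destruct bM as [x0 [F [HF HM]]]. apply nE'.
    apply (subE cs (comp (inv F) F)).
    * apply (compE cs); [apply (invE cs)|]; auto.
    * intro x; apply (diagE cs' x HE').
    * intros x y Exy. destruct (classic (x = y)) as [<-|nxy].
      { apply (diagE cs). apply (compE cs); [apply (invE cs)|]; auto. }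
      assert (Sx : S x). { exists y. split; auto. left; auto. }
      exists x0. split.
      { apply HM. left; auto. }
      { apply HM. right. exists x. auto. }
  + apply (K M); auto.
    eapply (bsub cs' (bunion cs' (liftb inc bS) (bball cs' (liftb inc bS) HE'))).
    intros x hx; exact hx.
- destruct (classic (bounded EE (fun x => A x /\ S x))) as [b1|n1].
  + assert (n2 : ~ bounded EE (fun x => ~ A x /\ S x)).
    { intro b2. apply nS. eapply (bsub cs (bunion cs b1 b2)). intros x Sx.
      destruct (classic (A x)); auto. }
    pose proof (large_bnd (en' _ n2)) as hc.
    assert (bA : bounded EE A).
    { eapply (bsub cs hc). intros x Ax [nA _]. auto. }
    apply (K (fun x => ~ A x /\ S x)); [|exact n2].
    eapply (bsub cs' (bunion cs' (bball cs' (liftb inc bA) HE')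
                                   (bball cs' (liftb inc bA) (invE cs' HE')))).
    intros x [nAx Sx]. destruct (proj2 (HA x Sx) nAx) as [y [[Rxy|Ryx] Ay]].
    * right. exists y. split; auto.
    * left. exists y. split; auto.
  + pose proof (large_bnd (en' _ n1)) as hc.
    assert (bA : bounded EE (fun x => ~ A x)).
    { eapply (bsub cs hc). intros x nAx [Ax _]. auto. }
    apply (K (fun x => A x /\ S x)); [|exact n1].
    eapply (bsub cs' (bunion cs' (bball cs' (liftb inc bA) HE')
                                   (bball cs' (liftb inc bA) (invE cs' HE')))).
    intros x [Ax Sx]. destruct (proj1 (HA x Sx) Ax) as [y [[Rxy|Ryx] nAy]].
    * right. exists y. split; auto.
    * left. exists y. split; auto.
Qed.


Lemma T_max_un : maximal EE -> ultranormal EE.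
Proof using cs dis.
intros [ub mx]. split; auto. intros [Y [Z [nY [nZ had]]]].
destruct (classic (exists x : X, True)) as [[x0 _]|nx].
2:{ destruct (mx (fun _ => True)) as [x _].
    - split; [|split; [|split; [|split]]].
      + intros E _ x. exfalso; eauto.
      + auto.
      + auto.
      + auto.
      + intros x y. exists (fun _ _ => True). auto.
    - split; auto. exists (fun _ _ => True). split; auto.
      intro h. destruct (dis _ h) as [B [[x _] _]]. eauto.
    - eauto. }
destruct (covE cs x0 x0) as [E1 [HE1 _]].
pose proof (asd_inter HE1 had) as bYZ.
set (Y' := fun x => Y x /\ ~ Z x).
set (W := fun x => ~ Y' x).
assert (nY' : ~ bounded EE Y').
{ intro h. apply nY. eapply (bsub cs (bunion cs h bYZ)). intros x Yx.
  destruct (classic (Z x)); [right|left]; split; auto. }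
set (EE' := fun E : X -> X -> Prop => (forall x, E x x) /\ exists E0 B, EE E0 /\ bounded EE B /\
  forall x y, E x y -> E0 x y \/ ((W x \/ B x) /\ (W y \/ B y))).
assert (inc : forall E, EE E -> EE' E).
{ intros E HE. split. intro; apply (diagE cs); auto.
  exists E, (fun y => y = x0). split; auto. split. apply (bsingle cs). auto. }
assert (cs' : coarse_structure EE').
{ split; [|split; [|split; [|split]]].
  - intros E [D _]. exact D.
  - intros E F [DE [E0 [B1 [HE0 [HB1 HE]]]]] [DF [F0 [B2 [HF0 [HB2 HF]]]]].
    destruct (dis _ HE0) as [BE [HBE HBEd]].
    destruct (dis _ HF0) as [BF [HBF HBFd]].
    split. { intro x. exists x. auto. }
    exists (comp E0 F0), (fun x => B1 x \/ (B2 x \/ (BE x \/ ballA F0 BF x))).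
    split. apply (compE cs); auto.
    split. { apply (bunion cs HB1). apply (bunion cs HB2). apply (bunion cs HBE). apply (bball cs HBF HF0). }
    intros x z [y [Exy Fyz]].
    destruct (HE x y Exy) as [e|e]; destruct (HF y z Fyz) as [f|f].
    + left. exists y. auto.
    + right. destruct (classic (BE x)) as [bx|nbx].
      * tauto.
      * apply (proj1 (HBEd x nbx y)) in e. subst y. tauto.
    + right. destruct (classic (BF y)) as [by_|nby].
      * assert (ballA F0 BF z) by (exists y; auto). tauto.
      * apply (proj1 (HBFd y nby z)) in f. subst z. tauto.
    + right. tauto.
  - intros E [DE [E0 [B [HE0 [HB HE]]]]]. split. intro x; apply DE.
    exists (inv E0), B. split. apply (invE cs); auto. split; auto.
    intros x y h. destruct (HE y x h) as [e|e]. left; exact e. right; tauto.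
  - intros E E2 [DE [E0 [B [HE0 [HB HE]]]]] D2 sub. split; [exact D2|].
    exists E0, B. split; [exact HE0|split; [exact HB|]]. intros x y h; apply HE, sub, h.
  - intros x y. destruct (covE cs x y) as [E [HE Exy]]. exists E. split; auto. }
destruct (mx EE' cs') as [x [G [[_ [G0 [B [HG0 [HB HG]]]]] HX]]].
- split; auto.
  exists (fun x y => x = y \/ (W x /\ W y)). split.
  + split. { intro; left; auto. }
    exists E1, (fun y => y = x0). split; auto. split. apply (bsingle cs).
    intros x y [<-|h]. left; apply (diagE cs); auto. right; tauto.
  + intro h. destruct (dis _ h) as [B [HB HBd]].
    apply nZ. destruct (classic (exists z, Z z /\ ~ B z)) as [[z [Zz nBz]]|nz].
    * eapply (bsub cs (bsingle cs z)). intros w Zw.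
      apply (proj1 (HBd z nBz w)). right. unfold W, Y'. split; tauto.
    * eapply (bsub cs HB). intros w Zw. apply NNPP. intro nB. apply nz. eauto.
- apply nY'. assert (bG : bounded EE (ball G0 x)) by (exists x, G0; auto).
  eapply (bsub cs (bunion cs bG HB)). intros y Yy.
  destruct (HG x y (HX y I)) as [g|[_ [w|b]]].
  + left; exact g.
  + exfalso. exact (w Yy).
  + right; exact b.
Qed.

End D.

Theorem theorem2 (X : Type) (EE : (X -> X -> Prop) -> Prop) :
  coarse_structure EE -> unbounded_ballean EE -> discrete EE ->
  (ultradiscrete EE <-> extremely_normal EE) /\
  (extremely_normal EE <-> ultranormal EE) /\
  (ultranormal EE <-> (maximal EE /\ irresolvable EE)).
Proof.
intros cs ub dis. split; [|split].
- split. apply (T_ud_en cs dis). apply (T_en_ud cs dis ub).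
- split. apply (T_en_un cs dis). apply (T_un_en cs dis).
- split.
  + intro u. split. apply (T_un_max cs dis u). apply (T_irr cs dis ub).
  + intros [m _]. apply (T_max_un cs dis m).
Qed.
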